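(* Let $n,m\ge 1$ and $V(n,m)=\{1,\dots,n\}\times\{1,\dots,m\}$. The minimum number of segments of a geometric tree (whether or not it is required to be noncrossing) covering $V(n,m)$ is $\min(n,m)$ if $n=1$ or $m=1$ or $n=m=2$, and $\min(n,m)+1$ otherwise.
   Context: A geometric tree is a finite abstract tree with at least one edge whose vertices are distinct points of the plane and whose edges are drawn as closed straight-line segments between their endpoints; it covers $P$ if $P$ is contained in the union of its edges; it is noncrossing if any two edges intersect only in a common endpoint. The number of segments of a geometric tree is the minimum number of closed straight-line segments whose union equals the union of the edges of the tree. *)

(* Defs.v *)
From Stdlib Require Import Reals List Relations.
Import ListNotations.
Open Scope R_scope.

Definition point : Type := (R * R)%type.

Definition on_seg (s : point * point) (x : point) : Prop :=
  exists t : R, 0 <= t <= 1 /\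
    x = (fst (fst s) + t * (fst (snd s) - fst (fst s)),
         snd (fst s) + t * (snd (snd s) - snd (fst s))).

Record ggraph := GGraph { gverts : list point; gedges : list (point * point) }.

Definition gadj (T : ggraph) (p q : point) : Prop :=
  In (p, q) (gedges T) \/ In (q, p) (gedges T).

Definition is_geom_tree (T : ggraph) : Prop :=
  NoDup (gverts T) /\
  gedges T <> [] /\
  NoDup (gedges T) /\
  (forall e, In e (gedges T) ->
     In (fst e) (gverts T) /\ In (snd e) (gverts T) /\ fst e <> snd e) /\
  (forall p q, In (p, q) (gedges T) -> ~ In (q, p) (gedges T)) /\
  (forall p q, In p (gverts T) -> In q (gverts T) ->
     clos_refl_trans point (gadj T) p q) /\
  length (gedges T) = (length (gverts T) - 1)%nat.

Definition on_edges (T : ggraph) (x : point) : Prop :=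
  exists e, In e (gedges T) /\ on_seg e x.

Definition covers (T : ggraph) (P : point -> Prop) : Prop :=
  forall x, P x -> on_edges T x.

Definition noncrossing (T : ggraph) : Prop :=
  forall e1 e2, In e1 (gedges T) -> In e2 (gedges T) -> e1 <> e2 ->
    forall x, on_seg e1 x -> on_seg e2 x ->
      (x = fst e1 \/ x = snd e1) /\ (x = fst e2 \/ x = snd e2).

Definition is_minimum (P : nat -> Prop) (k : nat) : Prop :=
  P k /\ forall j, P j -> (k <= j)%nat.

Definition seg_cover (T : ggraph) (k : nat) : Prop :=
  exists L : list (point * point), length L = k /\
    (forall s, In s L -> fst s <> snd s) /\
    (forall x, (exists s, In s L /\ on_seg s x) <-> on_edges T x).

Definition num_segments (T : ggraph) (k : nat) : Prop :=
  is_minimum (seg_cover T) k.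

Definition grid (n m : nat) (x : point) : Prop :=
  exists i j : nat, (1 <= i <= n)%nat /\ (1 <= j <= m)%nat /\
    x = (INR i, INR j).

Definition admissible (nc : bool) (n m : nat) (T : ggraph) : Prop :=
  is_geom_tree T /\ covers T (grid n m) /\ (nc = true -> noncrossing T).

Definition expected (n m : nat) : nat :=
  if ((n =? 1) || (m =? 1) || ((n =? 2) && (m =? 2)))%bool
  then Nat.min n m else (Nat.min n m + 1)%nat.

(* Main.v *)
Require Import Defs.
From Stdlib Require Import Reals List Relations Lra Lia Psatz Classical.
Import ListNotations.
Open Scope R_scope.

Definition pr (b : bool) (x : point) : R := if b then fst x else snd x.

Lemma on_seg_pr s x : on_seg s x -> exists t, 0 <= t <= 1 /\
  forall b, pr b x = pr b (fst s) + t * (pr b (snd s) - pr b (fst s)).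
Proof. intros [t [Ht ->]]. exists t; split; auto. intros []; reflexivity. Qed.

Lemma meet_le1 b c s x y : ~ (pr b (fst s) = c /\ pr b (snd s) = c) ->
  on_seg s x -> on_seg s y -> pr b x = c -> pr b y = c -> x = y.
Proof.
  intros Hn [t1 [H1 ->]] [t2 [H2 ->]].
  destruct s as [[p1 p2] [q1 q2]]; destruct b; simpl in *; intros E1 E2.
  - assert (Hd : q1 - p1 <> 0).
    { intro Hd. apply Hn. rewrite Hd in E1. split; lra. }
    assert (Ht : (t1 - t2) * (q1 - p1) = 0) by lra.
    apply Rmult_integral in Ht. destruct Ht as [Ht|Ht]; [|contradiction].
    replace t2 with t1 by lra. reflexivity.
  - assert (Hd : q2 - p2 <> 0).
    { intro Hd. apply Hn. rewrite Hd in E1. split; lra. }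
    assert (Ht : (t1 - t2) * (q2 - p2) = 0) by lra.
    apply Rmult_integral in Ht. destruct Ht as [Ht|Ht]; [|contradiction].
    replace t2 with t1 by lra. reflexivity.
Qed.

Definition decpp : forall x y : point * point, {x = y} + {x <> y}.
Proof.
  intros [[a b] [c d]] [[a' b'] [c' d']].
  destruct (Req_EM_T a a'), (Req_EM_T b b'), (Req_EM_T c c'), (Req_EM_T d d'); subst;
    try (left; reflexivity); right; congruence.
Defined.

Lemma count_le {A B : Type} (decB : forall x y : B, {x = y} + {x <> y})
  (Rl : A -> B -> Prop) (P : list A) :
  NoDup P -> forall L : list B, (forall p, In p P -> exists b, In b L /\ Rl p b) ->
  (forall b p1 p2, In b L -> In p1 P -> In p2 P -> Rl p1 b -> Rl p2 b -> p1 = p2) ->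
  (length P <= length L)%nat.
Proof.
  induction 1 as [|p P Hp HND IH]; intros L Hc Hi; simpl; [lia|].
  destruct (Hc p (or_introl eq_refl)) as [b [Hb Rb]].
  assert (H := remove_length_lt decB L b Hb).
  assert (length P <= length (remove decB b L))%nat; [|lia].
  apply IH.
  - intros p' Hp'. destruct (Hc p' (or_intror Hp')) as [b' [Hb' Rb']]. exists b'; split; auto.
    apply in_in_remove; auto. intro; subst b'. apply Hp.
    rewrite <- (Hi b p' p); simpl; auto.
  - intros b0 p1 p2 Hb0. apply in_remove in Hb0. destruct Hb0 as [Hb0 _].
    intros. apply (Hi b0); simpl; auto.
Qed.

Lemma count_used {A B : Type} (decB : forall x y : B, {x = y} + {x <> y})
  (Rl : A -> B -> Prop) (P : list A) (L : list B) :
  NoDup P -> (forall p, In p P -> exists b, In b L /\ Rl p b) ->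
  (forall b p1 p2, In b L -> In p1 P -> In p2 P -> Rl p1 b -> Rl p2 b -> p1 = p2) ->
  (length L <= length P)%nat ->
  forall b0, In b0 L -> exists p, In p P /\ Rl p b0.
Proof.
  intros HND Hc Hi Hlen b0 Hb0. apply NNPP; intro Hno.
  pose proof (remove_length_lt decB L b0 Hb0).
  assert (length P <= length (remove decB b0 L))%nat; [|lia].
  apply count_le with Rl; auto.
  - intros p Hp. destruct (Hc p Hp) as [b [Hb Rb]]. exists b. split; auto.
    apply in_in_remove; auto. intro; subst. apply Hno; eauto.
  - intros b p1 p2 Hb. apply in_remove in Hb. destruct Hb as [Hb _]. intros; apply (Hi b); auto.
Qed.

Lemma NoDup_map_inj {A B} (f : A -> B) l :
  (forall x y, In x l -> In y l -> f x = f y -> x = y) -> NoDup l -> NoDup (map f l).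
Proof.
  induction l as [|a l IH]; intros Hf Hn; simpl; constructor.
  - inversion Hn; subst. intro Hin. apply in_map_iff in Hin. destruct Hin as [x [Ex Hx]].
    assert (x = a) by (apply Hf; simpl; auto). subst. contradiction.
  - inversion Hn; subst. apply IH; auto. intros; apply Hf; simpl; auto.
Qed.

Definition cov (L : list (point * point)) (x : point) := exists s, In s L /\ on_seg s x.

Lemma line_count b c L P : NoDup P -> (forall x, In x P -> pr b x = c) ->
  (forall x, In x P -> cov L x) ->
  (forall s, In s L -> ~ (pr b (fst s) = c /\ pr b (snd s) = c)) ->
  (length P <= length L)%nat /\
  ((length L <= length P)%nat -> forall s, In s L -> exists x, In x P /\ on_seg s x).
Proof.
  intros HND Hc Hcov Hn.
  assert (Hi : forall s p1 p2, In s L -> In p1 P -> In p2 P -> on_seg s p1 -> on_seg s p2 -> p1 = p2).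
  { intros s p1 p2 Hs H1 H2 O1 O2. apply (meet_le1 b c s); auto. }
  split.
  - apply (count_le decpp (fun x s => on_seg s x)); auto.
  - intros Hl. apply (count_used decpp (fun x s => on_seg s x)); auto.
Qed.

Definition par (b : bool) (i : nat) (s : point * point) :=
  pr b (fst s) = INR i /\ pr b (snd s) = INR i.

Lemma par_count b K L : (forall i, (1 <= i <= K)%nat -> exists s, In s L /\ par b i s) ->
  (K <= length L)%nat /\
  ((length L <= K)%nat -> forall s, In s L -> exists i, par b i s).
Proof.
  intros Hc.
  assert (HN : NoDup (seq 1 K)) by apply seq_NoDup.
  assert (Hc' : forall i, In i (seq 1 K) -> exists s, In s L /\ par b i s).
  { intros i Hi. apply in_seq in Hi. apply Hc. lia. }
  assert (Hi : forall s i1 i2, In s L -> In i1 (seq 1 K) -> In i2 (seq 1 K) ->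
            par b i1 s -> par b i2 s -> i1 = i2).
  { intros s i1 i2 _ _ _ [E1 _] [E2 _]. apply INR_eq. congruence. }
  pose proof (count_le decpp (par b) (seq 1 K) HN L Hc' Hi) as H1.
  rewrite length_seq in H1. split; auto.
  intros Hl s Hs. destruct (count_used decpp (par b) (seq 1 K) L HN Hc' Hi) with s as [i [_ Hp]];
    auto. rewrite length_seq; auto. exists i; auto.
Qed.

Definition segpt (e : point * point) (t : R) : point :=
  (fst (fst e) + t * (fst (snd e) - fst (fst e)), snd (fst e) + t * (snd (snd e) - snd (fst e))).

Lemma pr_segpt b e t : pr b (segpt e t) = pr b (fst e) + t * (pr b (snd e) - pr b (fst e)).
Proof. destruct b; reflexivity. Qed.

Lemma on_seg_segpt e t : 0 <= t <= 1 -> on_seg e (segpt e t).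
Proof. intros; exists t; auto. Qed.

Lemma segpt0 e : segpt e 0 = fst e.
Proof. destruct e as [[a b] [c d]]; unfold segpt; simpl; f_equal; ring. Qed.
Lemma segpt1 e : segpt e 1 = snd e.
Proof. destruct e as [[a b] [c d]]; unfold segpt; simpl; f_equal; ring. Qed.

Lemma half_not_nat (i j : nat) : INR j <> INR i + /2.
Proof.
  intro H. assert (INR (2*j) = INR (2*i+1)) by (rewrite mult_INR, plus_INR, mult_INR; simpl; lra).
  apply INR_eq in H0. lia.
Qed.

Lemma aligned b T L : is_geom_tree T ->
  (forall x, cov L x <-> on_edges T x) ->
  (forall s, In s L -> exists i : nat, par b i s) ->
  forall x y, on_edges T x -> on_edges T y -> pr b x = pr b y.
Proof.
  intros HT HL Hv.
  destruct HT as [HND [Hne [HNDe [Hev [Hrev [Hconn Hlen]]]]]].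
  assert (Hint : forall x, on_edges T x -> exists i:nat, pr b x = INR i).
  { intros x Hx. apply HL in Hx. destruct Hx as [s [Hs Hxs]]. destruct (Hv s Hs) as [i [E1 E2]].
    exists i. destruct (on_seg_pr _ _ Hxs) as [t [_ Ht]]. rewrite Ht, E1, E2. ring. }
  assert (Hpt : forall e t, In e (gedges T) -> 0 <= t <= 1 -> on_edges T (segpt e t)).
  { intros e t He Ht. exists e; split; auto. apply on_seg_segpt; auto. }
  assert (Hends : forall e, In e (gedges T) -> pr b (fst e) = pr b (snd e)).
  { intros e He.
    destruct (Hint (fst e)) as [i Hi]. { rewrite <- segpt0. apply Hpt; auto; lra. }
    destruct (Hint (snd e)) as [k Hk]. { rewrite <- segpt1. apply Hpt; auto; lra. }
    rewrite Hi, Hk. destruct (Nat.eq_dec i k) as [->|Hne']; auto. exfalso.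
    destruct (Nat.lt_ge_cases i k) as [Hlt|Hge].
    - assert (Hd : INR k - INR i >= 1).
      { assert (INR (i+1) <= INR k) by (apply le_INR; lia). rewrite plus_INR in H; simpl in H; lra. }
      set (t := / (2 * (INR k - INR i))).
      assert (Ht : t * (2 * (INR k - INR i)) = 1) by (unfold t; field; lra).
      assert (0 <= t <= 1) by (split; nra).
      destruct (Hint _ (Hpt e t He H)) as [j Hj].
      rewrite pr_segpt, Hi, Hk in Hj. apply (half_not_nat i j). nra.
    - assert (Hlt : (k < i)%nat) by lia.
      assert (Hd : INR i - INR k >= 1).
      { assert (INR (k+1) <= INR i) by (apply le_INR; lia). rewrite plus_INR in H; simpl in H; lra. }
      set (t := 1 - / (2 * (INR i - INR k))).
      assert (Ht : (1 - t) * (2 * (INR i - INR k)) = 1) by (unfold t; field; lra).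
      assert (0 <= t <= 1) by (split; nra).
      destruct (Hint _ (Hpt e t He H)) as [j Hj].
      rewrite pr_segpt, Hi, Hk in Hj. apply (half_not_nat k j). nra. }
  assert (Hvv : forall p q, clos_refl_trans point (gadj T) p q -> pr b p = pr b q).
  { induction 1 as [p q [H|H]| |]; auto.
    - apply (Hends _ H).
    - symmetry; apply (Hends _ H).
    - congruence. }
  assert (Hx : forall x, on_edges T x -> exists e, In e (gedges T) /\ pr b x = pr b (fst e)).
  { intros x [e [He Hxe]]. exists e; split; auto.
    destruct (on_seg_pr _ _ Hxe) as [t [_ Ht]]. rewrite Ht, <- (Hends e He). ring. }
  intros x y Hx1 Hy1. destruct (Hx x Hx1) as [e1 [He1 E1]]. destruct (Hx y Hy1) as [e2 [He2 E2]].
  rewrite E1, E2. apply Hvv. apply Hconn; apply Hev; auto.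
Qed.

Lemma diag_contra s (a b N : R) : on_seg s (1, a) -> on_seg s (1+1, 1) -> on_seg s (N, b) ->
  a >= 2 -> b >= 1 -> N >= 3 -> False.
Proof.
  destruct s as [[px py] [qx qy]]; intros [t1 [_ E1]] [t2 [_ E2]] [t3 [_ E3]].
  simpl in *. injection E1 as E1 F1. injection E2 as E2 F2. injection E3 as E3 F3.
  intros Ha Hb HN.
  assert (A1 : (t2 - t1) * (qx - px) = 1) by lra.
  assert (A2 : (t3 - t2) * (qx - px) = N - 2) by lra.
  assert (A3 : (t2 - t1) * (qy - py) = 1 - a) by lra.
  assert (A4 : (t3 - t2) * (qy - py) = b - 1) by lra.
  assert (B1 : b - 1 = ((t3 - t2) * (qy - py)) * ((t2 - t1) * (qx - px))) by (rewrite A1; lra).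
  assert (B2 : ((t3 - t2) * (qy - py)) * ((t2 - t1) * (qx - px)) =
               ((t3 - t2) * (qx - px)) * ((t2 - t1) * (qy - py))) by ring.
  rewrite A2, A3 in B2. nra.
Qed.

Lemma exp_le n m : (expected n m <= Nat.min n m + 1)%nat.
Proof. unfold expected; destruct (_ || _)%bool; lia. Qed.

Lemma exp_1l m : (1 <= m)%nat -> expected 1 m = 1%nat.
Proof. intros; unfold expected; simpl; destruct m; simpl; lia. Qed.
Lemma exp_1r n : (1 <= n)%nat -> expected n 1 = 1%nat.
Proof. intros; unfold expected; destruct (Nat.eqb n 1); simpl; lia. Qed.
Lemma exp_small n : (1 <= n <= 2)%nat -> expected n n = n.
Proof. intros; unfold expected. destruct n as [|[|[|]]]; simpl; lia. Qed.
Lemma exp_gen n m : (2 <= n)%nat -> (2 <= m)%nat -> ~ (n = 2 /\ m = 2)%nat ->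
  expected n m = (Nat.min n m + 1)%nat.
Proof.
  intros; unfold expected.
  destruct (Nat.eqb_spec n 1), (Nat.eqb_spec m 1), (Nat.eqb_spec n 2), (Nat.eqb_spec m 2);
    simpl; lia.
Qed.

Definition colpts (i m : nat) : list point := map (fun j => (INR i, INR j)) (seq 1 m).
Definition rowpts (j n : nat) : list point := map (fun i => (INR i, INR j)) (seq 1 n).

Lemma colpts_ok i m : NoDup (colpts i m) /\ length (colpts i m) = m /\
  forall x, In x (colpts i m) <-> exists j, (1 <= j <= m)%nat /\ x = (INR i, INR j).
Proof.
  unfold colpts; split; [|split].
  - apply NoDup_map_inj; [|apply seq_NoDup]. intros x y _ _ H. injection H; apply INR_eq.
  - rewrite length_map, length_seq; auto.
  - intros x; rewrite in_map_iff; split.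
    + intros [j [<- Hj]]; apply in_seq in Hj; exists j; split; auto; lia.
    + intros [j [Hj ->]]; exists j; split; auto; apply in_seq; lia.
Qed.
Lemma rowpts_ok j n : NoDup (rowpts j n) /\ length (rowpts j n) = n /\
  forall x, In x (rowpts j n) <-> exists i, (1 <= i <= n)%nat /\ x = (INR i, INR j).
Proof.
  unfold rowpts; split; [|split].
  - apply NoDup_map_inj; [|apply seq_NoDup]. intros x y _ _ H. injection H; intros; apply INR_eq; auto.
  - rewrite length_map, length_seq; auto.
  - intros x; rewrite in_map_iff; split.
    + intros [i [<- Hi]]; apply in_seq in Hi; exists i; split; auto; lia.
    + intros [i [Hi ->]]; exists i; split; auto; apply in_seq; lia.
Qed.

Lemma LB n m T L : (1 <= n)%nat -> (1 <= m)%nat -> is_geom_tree T -> covers T (grid n m) ->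
  (forall x, cov L x <-> on_edges T x) -> (expected n m <= length L)%nat.
Proof.
  intros Hn Hm HT Hc HL.
  assert (Hge : forall i j, (1<=i<=n)%nat -> (1<=j<=m)%nat -> on_edges T (INR i, INR j)).
  { intros i j Hi Hj. apply Hc. exists i, j; auto. }
  assert (Hg : forall i j, (1<=i<=n)%nat -> (1<=j<=m)%nat -> cov L (INR i, INR j)).
  { intros i j Hi Hj. apply HL, Hge; auto. }
  pose proof (exp_le n m) as Hle.
  destruct (classic (forall i, (1 <= i <= n)%nat -> exists s, In s L /\ par true i s)) as [HV|HV].
  { destruct (par_count true n L HV) as [H1 H2].
    destruct (Nat.eq_dec (length L) n) as [HNn|HNn]; [|lia].
    assert (n = 1)%nat.
    { destruct (Nat.eq_dec n 1); auto. exfalso.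
      pose proof (aligned true T L HT HL (H2 ltac:(lia)) (INR 1, INR 1) (INR 2, INR 1)
                    (Hge 1%nat 1%nat ltac:(lia) ltac:(lia)) (Hge 2%nat 1%nat ltac:(lia) ltac:(lia))) as E.
      simpl in E. lra. }
    rewrite HNn, H, exp_1l; lia. }
  destruct (classic (forall j, (1 <= j <= m)%nat -> exists s, In s L /\ par false j s)) as [HH|HH].
  { destruct (par_count false m L HH) as [H1 H2].
    destruct (Nat.eq_dec (length L) m) as [HNn|HNn]; [|lia].
    assert (m = 1)%nat.
    { destruct (Nat.eq_dec m 1); auto. exfalso.
      pose proof (aligned false T L HT HL (H2 ltac:(lia)) (INR 1, INR 1) (INR 1, INR 2)
                    (Hge 1%nat 1%nat ltac:(lia) ltac:(lia)) (Hge 1%nat 2%nat ltac:(lia) ltac:(lia))) as E.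
      simpl in E. lra. }
    rewrite HNn, H, exp_1r; lia. }
  assert (Hi0: exists i0, (1<=i0<=n)%nat /\ forall s, In s L -> ~ par true i0 s).
  { apply NNPP; intro Hno. apply HV. intros i Hi. apply NNPP; intro Hno2. apply Hno.
    exists i; split; auto. intros s Hs Hp. apply Hno2; exists s; auto. }
  assert (Hj0: exists j0, (1<=j0<=m)%nat /\ forall s, In s L -> ~ par false j0 s).
  { apply NNPP; intro Hno. apply HH. intros i Hi. apply NNPP; intro Hno2. apply Hno.
    exists i; split; auto. intros s Hs Hp. apply Hno2; exists s; auto. }
  destruct Hi0 as [i0 [Hi0 Hni0]]. destruct Hj0 as [j0 [Hj0 Hnj0]].
  destruct (colpts_ok i0 m) as [Cnd [Clen Cin]].
  destruct (line_count true (INR i0) L (colpts i0 m) Cnd) as [C1 C2].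
  { intros x Hx; apply Cin in Hx; destruct Hx as [j [_ ->]]; reflexivity. }
  { intros x Hx; apply Cin in Hx; destruct Hx as [j [Hj ->]]; apply Hg; auto. }
  { intros s Hs; apply Hni0; auto. }
  destruct (rowpts_ok j0 n) as [Rnd [Rlen Rin]].
  destruct (line_count false (INR j0) L (rowpts j0 n) Rnd) as [R1 R2].
  { intros x Hx; apply Rin in Hx; destruct Hx as [j [_ ->]]; reflexivity. }
  { intros x Hx; apply Rin in Hx; destruct Hx as [j [Hj ->]]; apply Hg; auto. }
  { intros s Hs; apply Hnj0; auto. }
  rewrite Clen in C1, C2. rewrite Rlen in R1, R2.
  destruct (Compare_dec.le_lt_dec (Nat.min n m + 1) (length L)) as [Hbig|Hsm]; [lia|].
  assert (n = m /\ length L = n) as [<- HN] by lia.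
  destruct (Compare_dec.le_lt_dec n 2) as [Hn2|Hn3]. { rewrite exp_small; lia. }
  exfalso.
  assert (Hnv : forall s, In s L -> pr true (fst s) <> pr true (snd s)).
  { intros s Hs Heq. destruct (C2 ltac:(lia) s Hs) as [x [Hx Hxs]].
    apply Cin in Hx. destruct Hx as [j [_ ->]].
    apply (Hni0 s Hs). destruct (on_seg_pr _ _ Hxs) as [t [_ Ht]].
    specialize (Ht true). change (pr true (INR i0, INR j)) with (INR i0) in Ht.
    unfold par. rewrite <- Heq in *. split; nra. }
  assert (Hnh : forall s, In s L -> pr false (fst s) <> pr false (snd s)).
  { intros s Hs Heq. destruct (R2 ltac:(lia) s Hs) as [x [Hx Hxs]].
    apply Rin in Hx. destruct Hx as [j [_ ->]].
    apply (Hnj0 s Hs). destruct (on_seg_pr _ _ Hxs) as [t [_ Ht]].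
    specialize (Ht false). change (pr false (INR j, INR j0)) with (INR j0) in Ht.
    unfold par. rewrite <- Heq in *. split; nra. }
  assert (Hcol : forall i, (1 <= i <= n)%nat -> forall s, In s L ->
            exists j, (1 <= j <= n)%nat /\ on_seg s (INR i, INR j)).
  { intros i Hi s Hs.
    destruct (colpts_ok i n) as [Dnd [Dlen Din]].
    destruct (line_count true (INR i) L (colpts i n) Dnd) as [D1 D2].
    { intros x Hx; apply Din in Hx; destruct Hx as [j [_ ->]]; reflexivity. }
    { intros x Hx; apply Din in Hx; destruct Hx as [j [Hj ->]]; apply Hg; auto. }
    { intros s' Hs' [E1 E2]. apply (Hnv s' Hs'). congruence. }
    rewrite Dlen in D2. destruct (D2 ltac:(lia) s Hs) as [x [Hx Hxs]].
    apply Din in Hx. destruct Hx as [j [Hj ->]]. exists j; auto. }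
  destruct (Hg 2%nat 1%nat ltac:(lia) ltac:(lia)) as [s [Hs Hs21]].
  destruct (Hcol 1%nat ltac:(lia) s Hs) as [a [Ha Hsa]].
  destruct (Hcol n ltac:(lia) s Hs) as [b [Hb Hsb]].
  assert (a <> 1)%nat.
  { intro; subst a.
    assert (E : (INR 1, INR 1) = (INR 2, INR 1)).
    { apply (meet_le1 false (INR 1) s); auto.
      intros [E1 E2]. apply (Hnh s Hs). congruence. }
    injection E; simpl; lra. }
  assert (INR a >= 2) by (assert (INR 2 <= INR a) by (apply le_INR; lia); simpl in *; lra).
  assert (INR b >= 1) by (assert (INR 1 <= INR b) by (apply le_INR; lia); simpl in *; lra).
  assert (INR n >= 3) by (assert (INR 3 <= INR n) by (apply le_INR; lia); simpl in *; lra).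
  simpl in Hsa, Hs21. apply (diag_contra s (INR a) (INR b) (INR n)); auto.
Qed.

Definition mk (b : bool) (u v : R) : point := if b then (u, v) else (v, u).
Lemma mk_inj b u v u' v' : mk b u v = mk b u' v' -> u = u' /\ v = v'.
Proof. destruct b; simpl; intro H; injection H; auto. Qed.
Lemma on_seg_mk b u1 v1 u2 v2 x : on_seg (mk b u1 v1, mk b u2 v2) x <->
  exists t, 0 <= t <= 1 /\ x = mk b (u1 + t*(u2-u1)) (v1 + t*(v2-v1)).
Proof. destruct b; unfold on_seg; simpl; tauto. Qed.

Definition colE b M i := (mk b (INR i) 1, mk b (INR i) (INR M)).
Definition conE b i := (mk b (INR i) 1, mk b (INR (S i)) 1).
Definition combV b K M := map (fun i => mk b (INR i) 1) (seq 1 K) ++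
                          map (fun i => mk b (INR i) (INR M)) (seq 1 K).
Definition combE b K M := map (colE b M) (seq 1 K) ++ map (conE b) (seq 1 (K-1)).
Definition comb b K M := GGraph (combV b K M) (combE b K M).
Definition combL b K M := map (colE b M) (seq 1 K) ++
  (if Nat.eqb K 1 then [] else [(mk b 1 1, mk b (INR K) 1)]).

Lemma in_combV b K M x : In x (combV b K M) <-> exists i, (1<=i<=K)%nat /\
  (x = mk b (INR i) 1 \/ x = mk b (INR i) (INR M)).
Proof.
  unfold combV; rewrite in_app_iff, !in_map_iff; split.
  - intros [[i [<- Hi]]|[i [<- Hi]]]; apply in_seq in Hi; exists i; split; auto; lia.
  - intros [i [Hi [->| ->]]]; [left|right]; exists i; split; auto; apply in_seq; lia.
Qed.

Lemma in_combE b K M e : In e (combE b K M) <->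
  (exists i, (1<=i<=K)%nat /\ e = colE b M i) \/ (exists i, (1<=i<K)%nat /\ e = conE b i).
Proof.
  unfold combE; rewrite in_app_iff, !in_map_iff; split.
  - intros [[i [<- Hi]]|[i [<- Hi]]]; apply in_seq in Hi; [left|right]; exists i; split; auto; lia.
  - intros [[i [Hi ->]]|[i [Hi ->]]]; [left|right]; exists i; split; auto; apply in_seq; lia.
Qed.

Lemma INR_M_neq1 M : (2 <= M)%nat -> INR M <> 1.
Proof. intros H E. assert (INR 2 <= INR M) by (apply le_INR; auto). simpl in H0. lra. Qed.

Lemma crt_sym {A} (Rl : A -> A -> Prop) : (forall x y, Rl x y -> Rl y x) ->
  forall x y, clos_refl_trans A Rl x y -> clos_refl_trans A Rl y x.
Proof.
  intros Hs x y H; induction H.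
  - apply rt_step; auto.
  - apply rt_refl.
  - eapply rt_trans; eauto.
Qed.

Lemma comb_tree b K M : (1 <= K)%nat -> (2 <= M)%nat -> is_geom_tree (comb b K M).
Proof.
  intros HK HM. pose proof (INR_M_neq1 M HM) as HM1.
  assert (HM2 : INR M >= 2) by (assert (INR 2 <= INR M) by (apply le_INR; auto); simpl in *; lra).
  unfold is_geom_tree, comb; simpl.
  split; [|split; [|split; [|split; [|split; [|split]]]]].
  - unfold combV. apply NoDup_app.
    + apply NoDup_map_inj; [|apply seq_NoDup]. intros x y _ _ E; apply mk_inj in E.
      apply INR_eq; tauto.
    + apply NoDup_map_inj; [|apply seq_NoDup]. intros x y _ _ E; apply mk_inj in E.
      apply INR_eq; tauto.
    + intros a H1 H2. apply in_map_iff in H1, H2. destruct H1 as [i [<- _]].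
      destruct H2 as [j [E _]]. apply mk_inj in E. destruct E as [_ E]. lra.
  - intro E. assert (In (colE b M 1) (combE b K M)).
    { apply in_combE. left. exists 1%nat; split; [lia|reflexivity]. }
    rewrite E in H; contradiction.
  - unfold combE. apply NoDup_app.
    + apply NoDup_map_inj; [|apply seq_NoDup]. intros x y _ _ E.
      unfold colE in E. injection E; intros _ E'. apply mk_inj in E'. apply INR_eq; tauto.
    + apply NoDup_map_inj; [|apply seq_NoDup]. intros x y _ _ E.
      unfold conE in E. injection E; intros _ E'. apply mk_inj in E'. apply INR_eq; tauto.
    + intros a H1 H2. apply in_map_iff in H1, H2. destruct H1 as [i [<- _]].
      destruct H2 as [j [E _]]. unfold colE, conE in E. injection E; intros E' _.
      apply mk_inj in E'. destruct E' as [_ E']. lra.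
  - intros e He. apply in_combE in He.
    destruct He as [[i [Hi ->]]|[i [Hi ->]]]; unfold colE, conE; cbn [fst snd];
      rewrite !in_combV.
    + split; [exists i; auto|split; [exists i; auto|]].
      intro E; apply mk_inj in E; destruct E as [_ E]; lra.
    + split; [exists i; split; auto; lia|split; [exists (S i); split; auto; lia|]].
      intro E; apply mk_inj in E; destruct E as [E _]. rewrite S_INR in E. lra.
  - intros p q H1 H2. apply in_combE in H1, H2.
    destruct H1 as [[i [Hi E1]]|[i [Hi E1]]]; destruct H2 as [[j [Hj E2]]|[j [Hj E2]]];
      unfold colE, conE in *; repeat rewrite S_INR in E1; repeat rewrite S_INR in E2;
      injection E1; injection E2; intros; subst p q;
      repeat match goal with H : mk _ _ _ = mk _ _ _ |- _ => apply mk_inj in H; destruct H end;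
      lra.
  - assert (Hadj : forall x y, gadj (comb b K M) x y -> gadj (comb b K M) y x).
    { intros x y [H|H]; [right|left]; auto. }
    assert (Hlow : forall i, (1 <= i <= K)%nat ->
              clos_refl_trans point (gadj (comb b K M)) (mk b (INR 1) 1) (mk b (INR i) 1)).
    { induction i as [|i IH]; intros Hi; [lia|].
      destruct (Nat.eq_dec i 0) as [->|Hi0]; [apply rt_refl|].
      eapply rt_trans; [apply IH; lia|]. apply rt_step. left. simpl.
      change (mk b (INR i) 1, mk b (INR (S i)) 1) with (conE b i).
      apply in_combE. right. exists i; split; auto; lia. }
    assert (Hall : forall v, In v (combV b K M) ->
              clos_refl_trans point (gadj (comb b K M)) (mk b (INR 1) 1) v).
    { intros v Hv. apply in_combV in Hv. destruct Hv as [i [Hi [->| ->]]]; auto.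
      eapply rt_trans; [apply (Hlow i Hi)|]. apply rt_step. left. simpl.
      change (mk b (INR i) 1, mk b (INR i) (INR M)) with (colE b M i).
      apply in_combE. left. exists i; auto. }
    intros p q Hp Hq. eapply rt_trans; [apply crt_sym; auto; apply Hall; auto|apply Hall; auto].
  - unfold combE, combV. rewrite !length_app, !length_map, !length_seq. lia.
Qed.

Lemma INR_ge2 M : (2 <= M)%nat -> INR M >= 2.
Proof. intros; assert (INR 2 <= INR M) by (apply le_INR; auto); simpl in *; lra. Qed.
Lemma INR_ge1 M : (1 <= M)%nat -> INR M >= 1.
Proof. intros; assert (INR 1 <= INR M) by (apply le_INR; auto); simpl in *; lra. Qed.

Lemma comb_cov b K M : (2 <= M)%nat -> forall i j, (1 <= i <= K)%nat -> (1 <= j <= M)%nat ->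
  on_edges (comb b K M) (mk b (INR i) (INR j)).
Proof.
  intros HM i j Hi Hj. pose proof (INR_ge2 M HM).
  exists (colE b M i); split; [apply in_combE; left; exists i; auto|].
  unfold colE; apply on_seg_mk.
  assert (Hj1 : INR j >= 1) by (apply INR_ge1; lia).
  assert (Hj2 : INR j <= INR M) by (apply le_INR; lia).
  set (t := (INR j - 1) / (INR M - 1)).
  assert (Ht : t * (INR M - 1) = INR j - 1) by (unfold t; field; lra).
  exists t; split; [split; nra|]. f_equal; nra.
Qed.

Lemma nat_between (i k : nat) s : INR i = INR k + s -> 0 <= s <= 1 ->
  (i = k /\ s = 0) \/ (i = S k /\ s = 1).
Proof.
  intros E Hs.
  assert (k <= i)%nat by (apply INR_le; lra).
  assert (i <= S k)%nat by (apply INR_le; rewrite S_INR; lra).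
  destruct (Nat.eq_dec i k) as [->|Hne]; [left; split; auto; lra|].
  right. assert (i = S k) by lia. subst. rewrite S_INR in E. split; auto; lra.
Qed.

Lemma cross_colcon b M i j x : (2 <= M)%nat ->
  on_seg (colE b M i) x -> on_seg (conE b j) x ->
  (x = fst (colE b M i) \/ x = snd (colE b M i)) /\
  (x = fst (conE b j) \/ x = snd (conE b j)).
Proof.
  intros HM O1 O2. pose proof (INR_ge2 M HM).
  unfold colE, conE in *. rewrite S_INR in *. cbn [fst snd].
  apply on_seg_mk in O1, O2. destruct O1 as [t [Ht ->]]. destruct O2 as [s [Hs E]].
  apply mk_inj in E. destruct E as [E1 E2].
  assert (t = 0) by nra. subst t.
  assert (Hb := nat_between i j s ltac:(nra) Hs).
  destruct Hb as [[-> ->]|[-> ->]].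
  - split; left; f_equal; ring.
  - split; [left|right]; f_equal; rewrite ?S_INR; ring.
Qed.

Lemma comb_nc b K M : (2 <= M)%nat -> noncrossing (comb b K M).
Proof.
  intros HM e1 e2 H1 H2 Hne x O1 O2. simpl in H1, H2.
  apply in_combE in H1, H2.
  destruct H1 as [[i [Hi ->]]|[i [Hi ->]]]; destruct H2 as [[j [Hj ->]]|[j [Hj ->]]].
  - exfalso. unfold colE in *. apply on_seg_mk in O1, O2.
    destruct O1 as [t [Ht ->]]. destruct O2 as [s [Hs E]].
    apply mk_inj in E. destruct E as [E1 _].
    assert (i = j) by (apply INR_eq; lra). subst; auto.
  - apply cross_colcon; auto.
  - apply and_comm, cross_colcon; auto.
  - unfold conE in *. rewrite S_INR in *. cbn [fst snd].
    apply on_seg_mk in O1, O2. destruct O1 as [t [Ht ->]]. destruct O2 as [s [Hs E]].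
    apply mk_inj in E. destruct E as [E1 _].
    assert (i <> j) by (intro; subst; apply Hne; rewrite S_INR; reflexivity).
    destruct (Nat.lt_ge_cases i j) as [Hlt|Hge].
    + assert (INR (S i) <= INR j) by (apply le_INR; lia). rewrite S_INR in H0.
      assert (t = 1) by nra. assert (s = 0) by nra. subst.
      split; [right|left]; f_equal; lra.
    + assert (INR (S j) <= INR i) by (apply le_INR; lia). rewrite S_INR in H0.
      assert (t = 0) by nra. assert (s = 1) by nra. subst.
      split; [left|right]; f_equal; rewrite ?S_INR; lra.
Qed.

Lemma floor_lem K : (1 <= K)%nat -> forall u, 1 <= u <= INR K + 1 ->
  exists k, (1 <= k <= K)%nat /\ INR k <= u <= INR k + 1.
Proof.
  induction K as [|K IH]; intros HK u Hu; [lia|].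
  destruct (Nat.eq_dec K 0) as [->|HK0].
  - exists 1%nat; simpl in *; split; [lia|lra].
  - destruct (Rle_dec u (INR K + 1)) as [Hle|Hgt].
    + destruct (IH ltac:(lia) u) as [k [Hk Hk2]]; [lra|]. exists k; split; auto; lia.
    + exists (S K); split; [lia|]. rewrite S_INR in *. lra.
Qed.

Lemma comb_seg b K M : (1 <= K)%nat -> (2 <= M)%nat ->
  seg_cover (comb b K M) (if Nat.eqb K 1 then 1%nat else S K).
Proof.
  intros HK HM. pose proof (INR_ge2 M HM) as HM2.
  exists (combL b K M). split; [|split].
  - unfold combL; rewrite length_app, length_map, length_seq.
    destruct (Nat.eqb_spec K 1); simpl; lia.
  - intros s Hs. unfold combL in Hs. apply in_app_iff in Hs. destruct Hs as [Hs|Hs].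
    + apply in_map_iff in Hs. destruct Hs as [i [<- _]]. unfold colE; cbn [fst snd].
      intro E; apply mk_inj in E; lra.
    + destruct (Nat.eqb_spec K 1); [destruct Hs|]. destruct Hs as [<-|[]]. cbn [fst snd].
      intro E; apply mk_inj in E. assert (INR 2 <= INR K) by (apply le_INR; lia).
      simpl in *; lra.
  - intros x; split.
    + intros [s [Hs Hxs]]. unfold combL in Hs. apply in_app_iff in Hs. destruct Hs as [Hs|Hs].
      * apply in_map_iff in Hs. destruct Hs as [i [<- Hi]]. apply in_seq in Hi.
        exists (colE b M i); split; auto. simpl. apply in_combE; left; exists i; split; auto; lia.
      * destruct (Nat.eqb_spec K 1); [destruct Hs|]. destruct Hs as [<-|[]].
        apply on_seg_mk in Hxs. destruct Hxs as [t [Ht ->]].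
        assert (HK2 : INR 2 <= INR K) by (apply le_INR; lia). simpl in HK2.
        destruct (floor_lem (K - 1) ltac:(lia) (1 + t * (INR K - 1))) as [k [Hk Hk2]].
        { rewrite minus_INR by lia. simpl. nra. }
        exists (conE b k); split.
        { simpl. apply in_combE; right; exists k; split; auto; lia. }
        unfold conE. apply on_seg_mk. exists (1 + t * (INR K - 1) - INR k).
        rewrite S_INR. split; [lra|]. f_equal; ring.
    + intros [e [He Hxe]]. simpl in He. apply in_combE in He.
      destruct He as [[i [Hi ->]]|[i [Hi ->]]].
      * exists (colE b M i); split; auto. unfold combL. apply in_app_iff; left.
        apply in_map_iff; exists i; split; auto; apply in_seq; lia.
      * destruct (Nat.eqb_spec K 1); [lia|].
        exists (mk b 1 1, mk b (INR K) 1). split.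
        { unfold combL. apply in_app_iff; right. destruct (Nat.eqb_spec K 1); [lia|]. left; auto. }
        unfold conE in Hxe. apply on_seg_mk in Hxe. destruct Hxe as [s [Hs ->]].
        apply on_seg_mk.
        assert (HK2 : INR 2 <= INR K) by (apply le_INR; lia). simpl in HK2.
        assert (Hi1 : INR i >= 1) by (apply INR_ge1; lia).
        assert (Hi2 : INR (S i) <= INR K) by (apply le_INR; lia). rewrite S_INR in *.
        set (t := (INR i + s - 1) / (INR K - 1)).
        assert (Ht : t * (INR K - 1) = INR i + s - 1) by (unfold t; field; lra).
        exists t. split; [split; nra|]. f_equal; nra.
Qed.

Definition cc : point := (3/2, 3/2).
Definition starV : list point := [cc; (1,1); (2,2); (2,1); (1,2)].
Definition starE : list (point * point) := [((1,1),cc); ((2,2),cc); ((2,1),cc); ((1,2),cc)].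
Definition star := GGraph starV starE.
Definition starL : list (point * point) := [((1,1),(2,2)); ((2,1),(1,2))].

Ltac pneq := let H := fresh in intro H; injection H; intros; lra.

Lemma star_tree : is_geom_tree star.
Proof.
  unfold is_geom_tree, star, starV, starE, cc; simpl.
  split; [|split; [|split; [|split; [|split; [|split]]]]].
  - repeat constructor; simpl; intros H; repeat destruct H as [H|H]; try contradiction;
      injection H; intros; lra.
  - discriminate.
  - repeat constructor; simpl; intros H; repeat destruct H as [H|H]; try contradiction;
      injection H; intros; lra.
  - intros e He; repeat destruct He as [He|He]; try contradiction; subst; simpl;
      (split; [tauto|split; [tauto|pneq]]).
  - intros p q H1 H2; repeat destruct H1 as [H1|H1]; try contradiction;
      injection H1; intros; subst;
      repeat destruct H2 as [H2|H2]; try contradiction; injection H2; intros; lra.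
  - assert (Hc : forall v, In v [(3/2,3/2); (1,1); (2,2); (2,1); (1,2)] ->
       clos_refl_trans point (gadj (GGraph [(3/2,3/2); (1,1); (2,2); (2,1); (1,2)]
         [((1,1),(3/2,3/2)); ((2,2),(3/2,3/2)); ((2,1),(3/2,3/2)); ((1,2),(3/2,3/2))])) v (3/2,3/2)).
    { intros v Hv; repeat destruct Hv as [Hv|Hv]; try contradiction; subst;
        try apply rt_refl; apply rt_step; left; simpl; tauto. }
    intros p q Hp Hq. eapply rt_trans; [apply Hc; auto|].
    apply crt_sym; [intros x y [H|H]; [right|left]; auto|]. apply Hc; auto.
  - reflexivity.
Qed.

Lemma star_cov : covers star (grid 2 2).
Proof.
  intros x [i [j [Hi [Hj ->]]]].
  assert (i = 1 \/ i = 2)%nat as [->| ->] by lia; assert (j = 1 \/ j = 2)%nat as [->| ->] by lia;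
    simpl; unfold on_edges, star, starE, cc; simpl.
  - exists ((1,1),(3/2,3/2)); split; [tauto|exists 0; split; [lra|f_equal; simpl; lra]].
  - exists ((1,2),(3/2,3/2)); split; [tauto|exists 0; split; [lra|f_equal; simpl; lra]].
  - exists ((2,1),(3/2,3/2)); split; [tauto|exists 0; split; [lra|f_equal; simpl; lra]].
  - exists ((2,2),(3/2,3/2)); split; [tauto|exists 0; split; [lra|f_equal; simpl; lra]].
Qed.

Lemma star_nc : noncrossing star.
Proof.
  intros e1 e2 H1 H2 Hne x [t [Ht Ex]] [s [Hs Ex']].
  unfold star, starE, cc in H1, H2; simpl in H1, H2.
  repeat destruct H1 as [H1|H1]; try contradiction; subst;
  repeat destruct H2 as [H2|H2]; try contradiction; subst;
  try (exfalso; apply Hne; reflexivity);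
  simpl in *; try subst x; injection Ex'; intros;
  assert (t = 1) by lra; subst; split; right; f_equal; lra.
Qed.

Lemma star_seg : seg_cover star 2.
Proof.
  exists starL. split; [reflexivity|split].
  - intros s Hs; unfold starL in Hs; simpl in Hs; repeat destruct Hs as [Hs|Hs];
      try contradiction; subst; simpl; pneq.
  - intros x; split.
    + intros [s [Hs [t [Ht ->]]]]. unfold starL in Hs; simpl in Hs.
      repeat destruct Hs as [Hs|Hs]; try contradiction; subst; simpl;
        unfold on_edges, star, starE, cc; simpl.
      * destruct (Rle_dec t (1/2)).
        -- exists ((1,1),(3/2,3/2)); split; [tauto|exists (2*t); split; [lra|f_equal; simpl; lra]].
        -- exists ((2,2),(3/2,3/2)); split; [tauto|exists (2*(1-t)); split; [lra|f_equal; simpl; lra]].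
      * destruct (Rle_dec t (1/2)).
        -- exists ((2,1),(3/2,3/2)); split; [tauto|exists (2*t); split; [lra|f_equal; simpl; lra]].
        -- exists ((1,2),(3/2,3/2)); split; [tauto|exists (2*(1-t)); split; [lra|f_equal; simpl; lra]].
    + intros [e [He [t [Ht ->]]]]. unfold star, starE, cc in He; simpl in He.
      repeat destruct He as [He|He]; try contradiction; subst; simpl; unfold starL; simpl.
      * exists ((1,1),(2,2)); split; [tauto|exists (t/2); split; [lra|f_equal; simpl; lra]].
      * exists ((1,1),(2,2)); split; [tauto|exists (1 - t/2); split; [lra|f_equal; simpl; lra]].
      * exists ((2,1),(1,2)); split; [tauto|exists (t/2); split; [lra|f_equal; simpl; lra]].
      * exists ((2,1),(1,2)); split; [tauto|exists (1 - t/2); split; [lra|f_equal; simpl; lra]].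
Qed.

Lemma num_seg_of nc n m T k : (1<=n)%nat -> (1<=m)%nat -> admissible nc n m T ->
  seg_cover T k -> k = expected n m -> num_segments T k.
Proof.
  intros Hn Hm [HT [Hc _]] Hs Hk. split; auto. intros j [L [HL [_ HU]]]. subst j k.
  apply (LB n m T L); auto.
Qed.

Lemma comb_adm nc n m b K M : (1 <= K)%nat -> (2 <= M)%nat ->
  (forall x, grid n m x -> exists i j, (1<=i<=K)%nat /\ (1<=j<=M)%nat /\ x = mk b (INR i) (INR j)) ->
  admissible nc n m (comb b K M).
Proof.
  intros HK HM Hg. split; [apply comb_tree; auto|split].
  - intros x Hx. destruct (Hg x Hx) as [i [j [Hi [Hj ->]]]]. apply comb_cov; auto.
  - intros _; apply comb_nc; auto.
Qed.

Theorem claim5 : forall (n m : nat), (1 <= n)%nat -> (1 <= m)%nat ->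
  forall nc : bool,
    is_minimum (fun k => exists T, admissible nc n m T /\ num_segments T k)
      (expected n m).
Proof.
  intros n m Hn Hm nc. split.
  - destruct (classic (n = 2 /\ m = 2)%nat) as [[-> ->]|H22].
    + exists star.
      assert (adm : admissible nc 2 2 star)
        by (split; [apply star_tree|split; [apply star_cov|intros; apply star_nc]]).
      split; auto. apply (num_seg_of nc 2 2); auto. apply star_seg.
    + destruct (Nat.eq_dec n 1) as [->|Hn1].
      * assert (adm : admissible nc 1 m (comb true 1 (Nat.max m 2))).
        { apply comb_adm; try lia. intros x [i [j [Hi [Hj ->]]]]. exists i, j.
          split; [lia|split; [lia|reflexivity]]. }
        exists (comb true 1 (Nat.max m 2)). split; auto.
        rewrite exp_1l by auto. apply (num_seg_of nc 1 m); auto; [|rewrite exp_1l; auto].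
        exact (comb_seg true 1 (Nat.max m 2) ltac:(lia) ltac:(lia)).
      * destruct (Nat.eq_dec m 1) as [->|Hm1].
        -- assert (adm : admissible nc n 1 (comb false 1 n)).
           { apply comb_adm; try lia. intros x [i [j [Hi [Hj ->]]]]. exists j, i.
             split; [lia|split; [lia|reflexivity]]. }
           exists (comb false 1 n). split; auto.
           rewrite exp_1r by auto. apply (num_seg_of nc n 1); auto; [|rewrite exp_1r; auto].
           exact (comb_seg false 1 n ltac:(lia) ltac:(lia)).
        -- rewrite exp_gen by lia.
           destruct (Compare_dec.le_lt_dec n m) as [Hnm|Hnm].
           ++ assert (adm : admissible nc n m (comb true n m)).
              { apply comb_adm; try lia. intros x [i [j [Hi [Hj ->]]]]. exists i, j.
                split; [lia|split; [lia|reflexivity]]. }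
              exists (comb true n m). split; auto.
              assert (HS := comb_seg true n m ltac:(lia) ltac:(lia)).
              destruct (Nat.eqb_spec n 1); [lia|].
              replace (Nat.min n m + 1)%nat with (S n) by lia.
              apply (num_seg_of nc n m); auto. rewrite exp_gen by lia. lia.
           ++ assert (adm : admissible nc n m (comb false m n)).
              { apply comb_adm; try lia. intros x [i [j [Hi [Hj ->]]]]. exists j, i.
                split; [lia|split; [lia|reflexivity]]. }
              exists (comb false m n). split; auto.
              assert (HS := comb_seg false m n ltac:(lia) ltac:(lia)).
              destruct (Nat.eqb_spec m 1); [lia|].
              replace (Nat.min n m + 1)%nat with (S m) by lia.
              apply (num_seg_of nc n m); auto. rewrite exp_gen by lia. lia.
  - intros j [T [[HT [Hc _]] [[L [HL [_ HU]]] _]]]. subst j. apply (LB n m T L); auto.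
Qed.
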